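(* Let $G$ be a graph with vertices labelled $1,\dots,n$, let $A$ be a normal subgroup of $\mathbb{Z}_2^{*V(G)}$ that is $\mathrm{End}\,G$-invariant (i.e. $\phi(A)\subset A$ for every graph homomorphism $\phi\colon G\to G$), and let $\Gamma=\mathbb{Z}_2^{*V(G)}/A$. Then there exists a group-theoretical graph category $\mathscr{C}$ such that $\mathscr{C}^G$ is the representation category of the quantum group $\mathbb{G}=\hat\Gamma\rtimes\mathrm{Aut}\,G$, i.e. $\mathscr{C}^G(k,l)=\mathrm{Mor}(u^{\otimes k},u^{\otimes l})$ for all $k,l\in\mathbb{N}_0$, where $u$ is the fundamental representation of $\mathbb{G}$.
   Context: Graphs are finite, undirected, without multiple edges, loops allowed, up to isomorphism; $N_k$ is the edgeless graph on $k$ vertices; graph homomorphisms map edges (including loops) to edges, and a vertex map $\phi$ induces a homomorphism of the groups $\mathbb{Z}_2^{*V}$ (generated by $V$ subject to $v^2=e$), also denoted $\phi$. A bilabelled graph is $(K,\mathbf{a},\mathbf{b})$ with $\mathbf{a}\in V(K)^k$, $\mathbf{b}\in V(K)^l$, up to isomorphism preserving tuples; $\mathscr{C}(k,l)$ those with $k$ inputs, $l$ outputs. Operations: tensor product $(K,\mathbf{a},\mathbf{b})\otimes(H,\mathbf{c},\mathbf{d})=(K\sqcup H,\mathbf{a}\mathbf{c},\mathbf{b}\mathbf{d})$; composition (for $|\mathbf{b}|=|\mathbf{c}|$) $(H,\mathbf{c},\mathbf{d})\cdot(K,\mathbf{a},\mathbf{b})=(H\cdot K,\mathbf{a},\mathbf{d})$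 with $H\cdot K$ the quotient of $K\sqcup H$ identifying $b_i$ with $c_i$ (edges between quotient vertices iff between some representatives); involution swaps the tuples. For a partition $\pi$ of $V(K)$, $K/\pi$ has the blocks as vertices with an edge between two (possibly equal) blocks iff $K$ has one between some of their elements, and $(K,\mathbf{a},\mathbf{b})/\pi=(K/\pi,q_\pi(\mathbf{a}),q_\pi(\mathbf{b}))$ with $q_\pi$ the quotient map. A graph category is a set of bilabelled graphs containing $(N_0,\emptyset,\emptyset)$, $(M,(v),(v))$, $(M,\emptyset,(v,v))$ ($M$ the one-vertex loopless graph with vertex $v$) and closed under tensor products, compositions and involution; it is group-theoretical if also closed under all quotients $\mathbf{K}\mapsto\mathbf{K}/\pi$. $\hat T^G_{(K,\mathbf{a},\mathbf{b})}\colon(\mathbb{C}^n)^{\otimes k}\to(\mathbb{C}^n)^{\otimes l}$ has $(\mathbf{j},\mathbf{i})$-entry $\#\{\phi\colon K\to G\text{ injective homomorphism}\mid\phi(\mathbf{a})=\mathbf{i},\phi(\mathbf{b})=\mathbf{j}\}$ and $\mathscr{C}^G(k,l)=\mathrm{span}\{\hat T^G_{\mathbf{K}}\mid\mathbf{K}\in\mathscr{C}(k,l)\}$. Quantum groups: for an orthogonal compact matrix quantum group $(O(\mathbb{G}),u)$, $\mathrm{Mor}(u^{\otimes k},u^{\otimes l})=\{T\mid Tu^{\otimes k}=u^{\otimes l}T\}$. A permutation group $H\subset S_n$ is $(O(H),v)$ with $v_{ij}(\sigma)=\delta_{i\sigma(j)}$; $\mathrm{Aut}\,G\subset S_n$ via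 the labelling. For $\Gamma$ a quotient of $\mathbb{Z}_2^{*n}$ by an $H$-invariant normal subgroup, with $\gamma_i\in\mathbb{C}\Gamma$ the images of the generators, $\hat\Gamma\rtimes H$ is $(\mathbb{C}\Gamma\otimes O(H),u)$ with $u_{ij}=\gamma_i\otimes v_{ij}$. *)

(* Defs.v *)
From mathcomp Require Import all_boot all_algebra all_fingroup.
From mathcomp Require Import complex Rstruct boolp.
Set Implicit Arguments. Unset Strict Implicit. Unset Printing Implicit Defensive.
Import GRing.Theory Num.Theory.
Local Open Scope ring_scope.

Definition CC : numClosedFieldType := (Rdefinitions.R)[i].

(* The group Z_2^{* n} (free product of n copies of Z_2), realised as  *)
(* reduced words over 'I_n (no two adjacent letters equal).            *)
Section Z2free.
Variable n : nat.

Definition reducedb (w : seq 'I_n) : bool := sorted (fun x y => x != y) w.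

Definition reduce_cons (x : 'I_n) (w : seq 'I_n) : seq 'I_n :=
  if w is y :: w' then (if x == y then w' else x :: w) else [:: x].

(* free reduction using the relations v^2 = e *)
Definition reduce (w : seq 'I_n) : seq 'I_n := foldr reduce_cons [::] w.

Lemma reduce_ok (w : seq 'I_n) : reducedb (reduce w).
Proof.
rewrite /reducedb; elim: w => [|x w IH] //=.
case: (reduce w) IH => [|y w'] //= H.
case: eqP => [_|/eqP ne] /=.
  by case: w' H => //= z w'' /andP[].
by rewrite ne H.
Qed.

Definition Z2free := {w : seq 'I_n | reducedb w}.

Definition zone : Z2free := exist _ [::] isT.
Definition zmul (x y : Z2free) : Z2free :=
  exist _ (reduce (proj1_sig x ++ proj1_sig y)) (reduce_ok _).
(* inverse of a product of involutions = reversed word *)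
Definition zinv (x : Z2free) : Z2free :=
  exist _ (reduce (rev (proj1_sig x))) (reduce_ok _).
Definition zword (p : seq 'I_n) : Z2free := exist _ (reduce p) (reduce_ok _).
Definition zmap (phi : 'I_n -> 'I_n) (x : Z2free) : Z2free :=
  exist _ (reduce (map phi (proj1_sig x))) (reduce_ok _).

Definition normal_subgroup (A : Z2free -> Prop) : Prop :=
  [/\ A zone,
      (forall x y, A x -> A y -> A (zmul x y)),
      (forall x, A x -> A (zinv x)) &
      (forall x y, A x -> A (zmul (zmul (zinv y) x) y))].

End Z2free.

Definition ghom (n : nat) (adj : rel 'I_n) (phi : 'I_n -> 'I_n) : Prop :=
  forall x y, adj x y -> adj (phi x) (phi y).

Definition End_invariant (n : nat) (adj : rel 'I_n) (A : Z2free n -> Prop) :=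
  forall phi : 'I_n -> 'I_n, ghom adj phi -> forall x, A x -> A (zmap phi x).

Definition isAut (n : nat) (adj : rel 'I_n) (s : {perm 'I_n}) : Prop :=
  forall x y, adj (s x) (s y) = adj x y.

(* Bilabelled graphs.  Vertices 'I_m; an undirected edge {x,y}         *)
(* (possibly a loop) is present iff  bg_adj x y || bg_adj y x.         *)
Record bgraph := BGraph {
  bg_m : nat;
  bg_adj : rel 'I_bg_m;
  bg_in : seq 'I_bg_m;
  bg_out : seq 'I_bg_m
}.

Arguments bg_adj : clear implicits.
Arguments bg_in : clear implicits.
Arguments bg_out : clear implicits.

Definition sadj (K : bgraph) : rel 'I_(bg_m K) :=
  fun x y => bg_adj K x y || bg_adj K y x.
Arguments sadj : clear implicits.

Definition bg_iso (K K' : bgraph) : Prop :=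
  exists f : 'I_(bg_m K) -> 'I_(bg_m K'),
    [/\ bijective f,
        (forall x y, sadj K' (f x) (f y) = sadj K x y),
        map f (bg_in K) = bg_in K' &
        map f (bg_out K) = bg_out K'].

Definition inC (k l : nat) (K : bgraph) : bool :=
  (size (bg_in K) == k) && (size (bg_out K) == l).

Definition dunion_adj (m1 m2 : nat) (e1 : rel 'I_m1) (e2 : rel 'I_m2)
  : rel 'I_(m1 + m2) :=
  fun x y => match split x, split y with
             | inl a, inl b => e1 a b
             | inr a, inr b => e2 a b
             | _, _ => false end.

Definition bg_tensor (K H : bgraph) : bgraph :=
  @BGraph (bg_m K + bg_m H) (dunion_adj (sadj K) (sadj H))
    (map (@lshift _ _) (bg_in K) ++ map (@rshift _ _) (bg_in H))
    (map (@lshift _ _) (bg_out K) ++ map (@rshift _ _) (bg_out H)).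

Definition bg_inv (K : bgraph) : bgraph :=
  @BGraph (bg_m K) (bg_adj K) (bg_out K) (bg_in K).

(* quotient K/pi, where the partition pi is given by a surjection q
   onto a set 'I_r of block labels *)
Definition bg_quot (K : bgraph) (r : nat) (q : 'I_(bg_m K) -> 'I_r) : bgraph :=
  @BGraph r (fun x y => [exists u, exists v, (q u == x) && (q v == y) && sadj K u v])
    (map q (bg_in K)) (map q (bg_out K)).

Arguments bg_quot K {r} q.

Definition surj (A B : Type) (f : A -> B) : Prop := forall y, exists x, f x = y.

(* K sqcup H with inputs a (of K) and outputs d (of H), before identification *)
Definition comp_base (H K : bgraph) : bgraph :=
  @BGraph (bg_m K + bg_m H) (dunion_adj (sadj K) (sadj H))
    (map (@lshift _ _) (bg_in K)) (map (@rshift _ _) (bg_out H)).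

Definition comp_rel (H K : bgraph) : rel 'I_(bg_m K + bg_m H) :=
  fun x y =>
    let z := zip (map (@lshift _ (bg_m H)) (bg_out K))
                 (map (@rshift (bg_m K) _) (bg_in H)) in
    ((x, y) \in z) || ((y, x) \in z).

Arguments comp_rel : clear implicits.
Arguments comp_base : clear implicits.

Definition is_comp (H K R : bgraph) : Prop :=
  size (bg_out K) = size (bg_in H) /\
  exists r (q : 'I_(bg_m K + bg_m H) -> 'I_r),
    [/\ surj q,
        (forall x y, (q x == q y) = connect (comp_rel H K) x y) &
        bg_iso (bg_quot (comp_base H K) q) R].

Definition M_vv  : bgraph := @BGraph 1 (fun _ _ => false) [:: ord0] [:: ord0].
Definition M_0vv : bgraph := @BGraph 1 (fun _ _ => false) [::] [:: ord0; ord0].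
Definition N_0   : bgraph := @BGraph 0 (fun _ _ => false) [::] [::].

Definition graph_category (C : bgraph -> Prop) : Prop :=
  [/\ (forall K K', C K -> bg_iso K K' -> C K'),
      C N_0 /\ C M_vv /\ C M_0vv,
      (forall K H, C K -> C H -> C (bg_tensor K H)),
      (forall H K R, C H -> C K -> is_comp H K R -> C R) &
      (forall K, C K -> C (bg_inv K))].

Definition group_theoretical (C : bgraph -> Prop) : Prop :=
  graph_category C /\
  forall K r (q : 'I_(bg_m K) -> 'I_r), surj q -> C K -> C (bg_quot K q).

(* The maps hat T^G_K and the spaces C^G(k,l).  A linear map           *)
(* (C^n)^{(x)k} -> (C^n)^{(x)l} is a matrix indexed by (j, i) with     *)
(* j : l.-tuple 'I_n (row) and i : k.-tuple 'I_n (column).             *)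
Definition TG (n : nat) (adjG : rel 'I_n) (K : bgraph) (j i : seq 'I_n) : CC :=
  (#|[set phi : {ffun 'I_(bg_m K) -> 'I_n} |
        [&& injectiveb phi,
            [forall x, forall y, sadj K x y ==> adjG (phi x) (phi y)],
            map phi (bg_in K) == i &
            map phi (bg_out K) == j]]|)%:R.

Definition CG (n : nat) (adjG : rel 'I_n) (C : bgraph -> Prop) (k l : nat)
  (T : l.-tuple 'I_n -> k.-tuple 'I_n -> CC) : Prop :=
  exists (N : nat) (c : 'I_N -> CC) (Ks : 'I_N -> bgraph),
    (forall x, C (Ks x) /\ inC k l (Ks x)) /\
    forall j i, T j i = \sum_(x < N) c x * TG adjG (Ks x) (val j) (val i).

(* O(G) = C Gamma (x) O(Aut G); an element is determined by its        *)
(* coefficients at (sigma, [g]) for sigma in Aut G and [g] in Gamma    *)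
(* (O(Aut G) = functions on Aut G, C Gamma = free vector space on      *)
(* Gamma).  ucoef A p i s g is this coefficient of the entry           *)
(*   (u^{(x)k})_{p,i} = u_{p1 i1} ... u_{pk ik}                        *)
(*     = gamma_{p1}...gamma_{pk} (x) v_{p1 i1} ... v_{pk ik},           *)
(* with v_{pi}(s) = delta_{p, s(i)}.                                   *)
Definition inGamma_class (n : nat) (A : Z2free n -> Prop) (w g : Z2free n) : bool :=
  asbool (A (zmul w (zinv g))).

Definition ucoef (n : nat) (A : Z2free n -> Prop) (k : nat) (p i : k.-tuple 'I_n)
  (s : {perm 'I_n}) (g : Z2free n) : CC :=
  (inGamma_class A (zword p) g)%:R *
  \prod_(m < k) (tnth p m == s (tnth i m))%:R.

Definition Mor (n : nat) (adjG : rel 'I_n) (A : Z2free n -> Prop) (k l : nat)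
  (T : l.-tuple 'I_n -> k.-tuple 'I_n -> CC) : Prop :=
  forall (j : l.-tuple 'I_n) (i : k.-tuple 'I_n) (s : {perm 'I_n}) (g : Z2free n),
    isAut adjG s ->
    \sum_(p : k.-tuple 'I_n) T j p * ucoef A p i s g =
    \sum_(q : l.-tuple 'I_n) ucoef A j q s g * T q i.

(* Main.v *)
Require Import Defs.
From mathcomp Require Import all_boot all_algebra all_fingroup.
From mathcomp Require Import complex Rstruct boolp.
Set Implicit Arguments. Unset Strict Implicit. Unset Printing Implicit Defensive.

Lemma rc_rc n (x : 'I_n) w : reducedb w -> reduce_cons x (reduce_cons x w) = w.
Proof.
case: w => [|y w] /=; first by rewrite eqxx.
case: eqP => [<-|/eqP ne] H; last by rewrite /= eqxx.
case: w H => [|z w] //= /andP[xz _].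
by rewrite (negbTE xz).
Qed.

Lemma reduce_id n (w : seq 'I_n) : reducedb w -> reduce w = w.
Proof.
elim: w => [|x w IH] //= H.
have Hw : reducedb w by case: w H {IH} => //= y w /andP[].
rewrite IH //; case: w H {IH Hw} => //= y w /andP[xy _].
by rewrite (negbTE xy).
Qed.

Lemma reduce_catr n (u v : seq 'I_n) : reduce (u ++ v) = foldr (@reduce_cons n) (reduce v) u.
Proof. by rewrite /reduce foldr_cat. Qed.

Lemma foldr_red n (u z : seq 'I_n) : reducedb z ->
  foldr (@reduce_cons n) z u = foldr (@reduce_cons n) z (reduce u).
Proof.
move=> Hz; elim: u => [|x u IH] //=.
rewrite IH.
have Hr := reduce_ok u.
case E: (reduce u) Hr => [|y r] Hr /=; first by [].
case: eqP => [<-|ne] /=; last by [].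
have : reducedb (foldr (@reduce_cons n) z r).
  by rewrite -(reduce_id Hz) -reduce_catr reduce_ok.
by move/rc_rc.
Qed.

Lemma reduce_cat n (u v : seq 'I_n) : reduce (u ++ v) = reduce (reduce u ++ reduce v).
Proof.
by rewrite !reduce_catr (reduce_id (reduce_ok v)) foldr_red // reduce_ok.
Qed.

Lemma reduce_catR n (u v : seq 'I_n) : reduce (u ++ v) = reduce (u ++ reduce v).
Proof. by rewrite reduce_cat [RHS]reduce_cat (reduce_id (reduce_ok v)). Qed.

Lemma reduce_catL n (u v : seq 'I_n) : reduce (u ++ v) = reduce (reduce u ++ v).
Proof. by rewrite reduce_cat [RHS]reduce_cat (reduce_id (reduce_ok u)). Qed.

Lemma reduce_mid n (x m y : seq 'I_n) : reduce (x ++ m ++ y) = reduce (x ++ reduce m ++ y).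
Proof. by rewrite (reduce_catR x) (reduce_catL m y) -(reduce_catR x). Qed.

Lemma reduce_revK n (u : seq 'I_n) : reduce (rev u ++ u) = [::].
Proof.
elim: u => [|x u IH] //=.
rewrite rev_cons -cats1 -catA /= reduce_catR /= rc_rc ?reduce_ok //.
by rewrite -reduce_catR.
Qed.

Lemma reduce_Krev n (u : seq 'I_n) : reduce (u ++ rev u) = [::].
Proof. by rewrite -{1}(revK u) reduce_revK. Qed.

Lemma reduce_rev n (u : seq 'I_n) : reduce (rev (reduce u)) = reduce (rev u).
Proof.
have H1 : reduce (u ++ rev (reduce u)) = [::] by rewrite reduce_catL reduce_Krev.
have -> : reduce (rev u) = reduce (rev u ++ reduce (u ++ rev (reduce u))).
  by rewrite H1 cats0.
by rewrite -reduce_catR catA reduce_catL reduce_revK.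
Qed.

Lemma reduce_map_rc n (f : 'I_n -> 'I_n) x r :
  reduce (map f (reduce_cons x r)) = reduce (map f (x :: r)).
Proof.
case: r => [|y r] //=.
case: eqP => [<-|] //=.
by rewrite rc_rc // reduce_ok.
Qed.

Lemma reduce_map n (f : 'I_n -> 'I_n) u : reduce (map f (reduce u)) = reduce (map f u).
Proof.
elim: u => [|x u IH] //=.
by rewrite reduce_map_rc /= IH.
Qed.

Lemma zword_val n (x : Z2free n) : zword (val x) = x.
Proof. by apply: val_inj; rewrite /= reduce_id //; case: x. Qed.

Lemma zword_eq n (u v : seq 'I_n) : reduce u = reduce v -> zword u = zword v.
Proof. by move=> H; apply: val_inj; rewrite /= H. Qed.

Lemma zmul_word n (u v : seq 'I_n) : zmul (zword u) (zword v) = zword (u ++ v).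
Proof. by apply: val_inj; rewrite /= -reduce_cat. Qed.

Lemma zinv_word n (u : seq 'I_n) : zinv (zword u) = zword (rev u).
Proof. by apply: val_inj; rewrite /= reduce_rev. Qed.

Lemma zmap_word n f (u : seq 'I_n) : zmap f (zword u) = zword (map f u).
Proof. by apply: val_inj; rewrite /= reduce_map. Qed.

Lemma zone_word n : zone n = zword [::].
Proof. by apply: val_inj. Qed.

Definition Aw n (A : Z2free n -> Prop) (u : seq 'I_n) := A (zword u).
Definition Erel n (A : Z2free n -> Prop) (u v : seq 'I_n) := Aw A (u ++ rev v).


Lemma Aw_red n (A : Z2free n -> Prop) u v : reduce u = reduce v -> Aw A u -> Aw A v.
Proof. by rewrite /Aw => /zword_eq ->. Qed.

Lemma Aw_nil n (A : Z2free n -> Prop) : normal_subgroup A -> Aw A [::].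
Proof. by case=> H _ _ _; rewrite /Aw -zone_word. Qed.

Lemma Aw_cat n (A : Z2free n -> Prop) u v : normal_subgroup A -> Aw A u -> Aw A v -> Aw A (u ++ v).
Proof. by case=> _ H _ _; rewrite /Aw -zmul_word; apply: H. Qed.

Lemma Aw_rev n (A : Z2free n -> Prop) u : normal_subgroup A -> Aw A u -> Aw A (rev u).
Proof. by case=> _ _ H _; rewrite /Aw -zinv_word; apply: H. Qed.

Lemma Aw_conj n (A : Z2free n -> Prop) u v : normal_subgroup A -> Aw A u -> Aw A (rev v ++ u ++ v).
Proof.
case=> _ _ _ H; rewrite /Aw => /(H _ (zword v)).
by rewrite zinv_word !zmul_word catA.
Qed.

Lemma Erel_refl n (A : Z2free n -> Prop) u : normal_subgroup A -> Erel A u u.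
Proof. by move=> hA; apply: (Aw_red _ (Aw_nil hA)); rewrite reduce_Krev. Qed.

Lemma Erel_sym n (A : Z2free n -> Prop) u v : normal_subgroup A -> Erel A u v -> Erel A v u.
Proof. by move=> hA /(Aw_rev hA); rewrite /Erel rev_cat revK. Qed.

Lemma Erel_trans n (A : Z2free n -> Prop) u v w : normal_subgroup A ->
  Erel A u v -> Erel A v w -> Erel A u w.
Proof.
move=> hA H1 H2; have := Aw_cat hA H1 H2; apply: Aw_red.
by rewrite -catA (catA (rev v)) reduce_mid reduce_revK.
Qed.

Lemma reduce_cancel n (x y z : seq 'I_n) : reduce (x ++ rev y ++ y ++ z) = reduce (x ++ z).
Proof. by rewrite (catA (rev y)) reduce_mid reduce_revK. Qed.

Lemma Erel_cat n (A : Z2free n -> Prop) b a b' a' : normal_subgroup A ->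
  Erel A b a -> Erel A b' a' -> Erel A (b ++ b') (a ++ a').
Proof.
move=> hA H1 H2.
have H3 := Aw_conj (rev b) hA H2; rewrite revK in H3.
have := Aw_cat hA H3 H1; apply: Aw_red.
rewrite /Erel rev_cat -!catA.
by have := reduce_cancel (b ++ b' ++ rev a') b (rev a); rewrite -!catA => ->.
Qed.

Lemma Erel_map n (A : Z2free n -> Prop) f u v : Erel A u v ->
  (forall x, A x -> A (zmap f x)) -> Erel A (map f u) (map f v).
Proof. by rewrite /Erel /Aw => H hf; rewrite -map_rev -map_cat -zmap_word; apply: hf. Qed.

Definition homG n (adjG : rel 'I_n) (K : bgraph) (phi : 'I_(bg_m K) -> 'I_n) :=
  forall x y, sadj K x y -> adjG (phi x) (phi y).

Definition Ccat n (adjG : rel 'I_n) (A : Z2free n -> Prop) (K : bgraph) : Prop :=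
  forall phi : 'I_(bg_m K) -> 'I_n, homG adjG phi -> Erel A (map phi (bg_out K)) (map phi (bg_in K)).

Lemma split_l m1 m2 (x : 'I_m1) : split (@lshift m1 m2 x) = inl x.
Proof. exact: (unsplitK (inl x)). Qed.
Lemma split_r m1 m2 (x : 'I_m2) : split (@rshift m1 m2 x) = inr x.
Proof. exact: (unsplitK (inr x)). Qed.

Lemma Ccat_iso n adjG A K K' : Ccat adjG A K -> bg_iso K K' -> @Ccat n adjG A K'.
Proof.
move=> HK [f [_ Hadj Hin Hout]] phi Hphi.
have := HK (phi \o f); rewrite (map_comp phi f) (map_comp phi f) Hin Hout; apply=> x y Hxy.
by apply: Hphi; rewrite Hadj.
Qed.

Lemma Ccat_inv n adjG A K : normal_subgroup A -> @Ccat n adjG A K -> Ccat adjG A (bg_inv K).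
Proof.
move=> hA HK phi Hphi; apply: Erel_sym => //; apply: HK => x y Hxy.
by apply: Hphi.
Qed.

Lemma Ccat_quot n adjG A K r (q : 'I_(bg_m K) -> 'I_r) :
  @Ccat n adjG A K -> Ccat adjG A (bg_quot K q).
Proof.
move=> HK phi Hphi; rewrite /= -!map_comp; apply: HK => x y Hxy.
apply: Hphi; rewrite /sadj /=; apply/orP; left.
by apply/existsP; exists x; apply/existsP; exists y; rewrite !eqxx Hxy.
Qed.

Lemma Ccat_tensor n adjG A K H : normal_subgroup A ->
  @Ccat n adjG A K -> Ccat adjG A H -> Ccat adjG A (bg_tensor K H).
Proof.
move=> hA HK HH phi Hphi; rewrite /= !map_cat -!map_comp.
apply: Erel_cat => //; [apply: HK | apply: HH] => x y Hxy; apply: Hphi;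
  by rewrite /sadj /= /dunion_adj ?split_l ?split_r Hxy.
Qed.

Lemma Ccat_N0 n adjG A : normal_subgroup A -> @Ccat n adjG A N_0.
Proof. by move=> hA phi _; apply: Erel_refl. Qed.
Lemma Ccat_Mvv n adjG A : normal_subgroup A -> @Ccat n adjG A M_vv.
Proof. by move=> hA phi _; apply: Erel_refl. Qed.
Lemma Ccat_M0vv n adjG A : normal_subgroup A -> @Ccat n adjG A M_0vv.
Proof.
move=> hA phi _; apply: (Aw_red _ (Aw_nil hA)).
by rewrite /reduce /= eqxx.
Qed.

Lemma map_zip_eq (T1 T2 : eqType) R (f : T1 -> R) (g : T2 -> R) s1 s2 :
  size s1 = size s2 -> (forall p, p \in zip s1 s2 -> f p.1 = g p.2) ->
  map f s1 = map g s2.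
Proof.
elim: s1 s2 => [|x s1 IH] [|y s2] //= [] Hs H.
rewrite (H (x, y)) ?mem_head // (IH s2) // => p Hp.
by apply: H; rewrite in_cons Hp orbT.
Qed.

Lemma Ccat_comp n adjG A H K R : normal_subgroup A ->
  @Ccat n adjG A H -> Ccat adjG A K -> is_comp H K R -> Ccat adjG A R.
Proof.
move=> hA HH HK [Hsz [r [q [_ Hq Hiso]]]].
apply: (Ccat_iso _ Hiso) => phi Hphi.
have Hpsi : forall u v, sadj (comp_base H K) u v -> adjG (phi (q u)) (phi (q v)).
  move=> u v Huv; apply: Hphi; rewrite /sadj /=; apply/orP; left.
  by apply/existsP; exists u; apply/existsP; exists v; rewrite !eqxx Huv.
have HL := HK (fun x => phi (q (lshift _ x))).
have HR := HH (fun x => phi (q (rshift _ x))).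
have Hmid : map q (map (@lshift _ (bg_m H)) (bg_out K)) =
            map q (map (@rshift (bg_m K) _) (bg_in H)).
  apply: map_zip_eq; first by rewrite !size_map.
  move=> [x y] Hxy /=; apply/eqP; rewrite Hq; apply: connect1.
  by rewrite /comp_rel Hxy.
rewrite /=.
apply: (@Erel_trans _ _ _ (map phi (map q (map (@lshift _ (bg_m H)) (bg_out K))))) => //.
  rewrite Hmid -!map_comp.
  apply: HR => x y Hxy; apply: Hpsi.
  by rewrite /sadj /= /dunion_adj !split_r Hxy.
rewrite -!map_comp.
apply: HL => x y Hxy; apply: Hpsi.
by rewrite /sadj /= /dunion_adj !split_l Hxy.
Qed.

Lemma Ccat_gt n adjG A : normal_subgroup A -> group_theoretical (@Ccat n adjG A).
Proof.
move=> hA; split; last by move=> K r q _; apply: Ccat_quot.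
split.
- by move=> K K'; apply: Ccat_iso.
- by split; [apply: Ccat_N0 | split; [apply: Ccat_Mvv | apply: Ccat_M0vv]].
- by move=> K H; apply: Ccat_tensor.
- by move=> H K R HH HK; apply: Ccat_comp.
- by move=> K; apply: Ccat_inv.
Qed.
Import GRing.Theory Num.Theory.
Local Open Scope ring_scope.

Lemma prod_ind n k (p t : k.-tuple 'I_n) :
  \prod_(m < k) ((tnth p m == tnth t m)%:R : CC) = (p == t)%:R.
Proof.
case: eqP => [->|ne].
  by rewrite big1 // => m _; rewrite eqxx.
case: (pickP (fun m => tnth p m != tnth t m)) => [m Hm|H]; last first.
  by case: ne; apply/eq_from_tnth => m; move: (H m) => /negbFE/eqP.
by rewrite (bigD1 m) //= (negbTE Hm) mul0r.
Qed.

Lemma eq_perm_inv n (s : {perm 'I_n}) x y : (x == s y) = ((s^-1)%g x == y).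
Proof. by rewrite -[RHS](inj_eq (@perm_inj _ s)) permKV. Qed.

Definition eb n (A : Z2free n -> Prop) (u v : seq 'I_n) : bool := `[< Erel A u v >].

Lemma cls_word n (A : Z2free n -> Prop) w v :
  inGamma_class A (zword w) (zword v) = eb A w v.
Proof. by rewrite /inGamma_class /eb /Erel /Aw zinv_word zmul_word. Qed.

Lemma sum_l n (A : Z2free n -> Prop) k l (T : l.-tuple 'I_n -> k.-tuple 'I_n -> CC) j i s v :
  \sum_(p : k.-tuple 'I_n) T j p * ucoef A p i s (zword v) =
  T j (map_tuple s i) * (eb A (map_tuple s i) v)%:R.
Proof.
rewrite (bigD1 (map_tuple s i)) //= big1 ?addr0.
  rewrite /ucoef cls_word.
  under eq_bigr => m _ do rewrite -(tnth_map s i m).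
  by rewrite (prod_ind (map_tuple s i) (map_tuple s i)) eqxx mulr1.
move=> p Hp; rewrite /ucoef.
under eq_bigr => m _ do rewrite -(tnth_map s i m).
by rewrite (prod_ind p (map_tuple s i)) (negbTE Hp) !mulr0.
Qed.

Lemma sum_r n (A : Z2free n -> Prop) k l (T : l.-tuple 'I_n -> k.-tuple 'I_n -> CC) j i s v :
  \sum_(q : l.-tuple 'I_n) ucoef A j q s (zword v) * T q i =
  (eb A j v)%:R * T (map_tuple (s^-1)%g j) i.
Proof.
rewrite (bigD1 (map_tuple (s^-1)%g j)) //= big1 ?addr0.
  rewrite /ucoef cls_word.
  under eq_bigr => m _ do rewrite eq_perm_inv -(tnth_map (s^-1)%g j m).
  by rewrite (prod_ind (map_tuple _ j) (map_tuple _ j)) eqxx mulr1.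
move=> q Hq; rewrite /ucoef.
under eq_bigr => m _ do rewrite eq_perm_inv -(tnth_map (s^-1)%g j m).
by rewrite (prod_ind (map_tuple _ j) q) eq_sym (negbTE Hq) !mulr0 mul0r.
Qed.

Lemma Mor_iff n (adjG : rel 'I_n) (A : Z2free n -> Prop) k l
  (T : l.-tuple 'I_n -> k.-tuple 'I_n -> CC) :
  Mor adjG A T <-> forall j i s v, isAut adjG s ->
    T j (map_tuple s i) * (eb A (map_tuple s i) v)%:R =
    (eb A j v)%:R * T (map_tuple (s^-1)%g j) i.
Proof.
split=> H j i s.
  by move=> v Hs; rewrite -sum_l -sum_r; apply: H.
by move=> g Hs; rewrite -(zword_val g) sum_l sum_r; apply: H.
Qed.

Definition fs n m (s : {perm 'I_n}) (phi : {ffun 'I_m -> 'I_n}) : {ffun 'I_m -> 'I_n} :=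
  [ffun x => s (phi x)].

Lemma fs_inj n m s : injective (@fs n m s).
Proof.
move=> p1 p2 /ffunP H; apply/ffunP => x; have := H x; rewrite !ffunE; apply: perm_inj.
Qed.

Lemma fsK n m s (phi : {ffun 'I_m -> 'I_n}) : fs s (fs (s^-1)%g phi) = phi.
Proof. by apply/ffunP => x; rewrite !ffunE permKV. Qed.

Lemma isAut_inv n adjG (s : {perm 'I_n}) : isAut adjG s -> isAut adjG (s^-1)%g.
Proof. by move=> H x y; rewrite -H !permKV. Qed.

Lemma map_fs n m s (phi : {ffun 'I_m -> 'I_n}) (a : seq 'I_m) :
  map (fs s phi) a = map s (map phi a).
Proof. by rewrite -map_comp; apply: eq_map => x; rewrite ffunE. Qed.

Lemma key_fs n adjG (K : bgraph) (s : {perm 'I_n}) j i phi : isAut adjG s ->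
  let P j i (phi : {ffun 'I_(bg_m K) -> 'I_n}) :=
    [&& injectiveb phi,
        [forall x, forall y, sadj K x y ==> adjG (phi x) (phi y)],
        map phi (bg_in K) == i &
        map phi (bg_out K) == j] in
  P (map s j) (map s i) (fs s phi) = P j i phi.
Proof.
move=> Hs P; rewrite /P !map_fs !(inj_eq (inj_map (@perm_inj _ s))).
congr [&& _, _ , _ & _].
  apply/injectiveP/injectiveP => H x y.
    by move=> E; apply: H; rewrite !ffunE E.
  by rewrite !ffunE => /perm_inj /H.
apply: eq_forallb => x; apply: eq_forallb => y.
by rewrite !ffunE Hs.
Qed.

Lemma TG_aut n adjG K (s : {perm 'I_n}) j i : isAut adjG s ->
  TG adjG K (map s j) (map s i) = TG adjG K j i.
Proof.
move=> Hs; rewrite /TG; symmetry; rewrite -(card_imset _ (@fs_inj n (bg_m K) s)).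
congr (_%:R); apply: eq_card => phi.
rewrite -[phi](fsK s) (mem_imset _ _ (@fs_inj _ _ s)) !inE.
by rewrite (key_fs _ _ _ Hs).
Qed.

Lemma count_aut n (adjG : rel 'I_n) (phi : 'I_n -> 'I_n) : injective phi ->
  (forall x y, adjG x y -> adjG (phi x) (phi y)) ->
  forall x y, adjG (phi x) (phi y) = adjG x y.
Proof.
move=> Hinj Hhom.
pose E := [set p : 'I_n * 'I_n | adjG p.1 p.2].
pose g := fun p : 'I_n * 'I_n => (phi p.1, phi p.2).
have ginj : injective g by move=> [a b] [c d] [/Hinj -> /Hinj ->].
have sub : g @: E \subset E.
  by apply/subsetP => _ /imsetP [[a b] Hab ->]; rewrite !inE /= in Hab *; apply: Hhom.
have eqE : g @: E = E.
  by apply/eqP; rewrite eqEcard sub (card_imset _ ginj) leqnn.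
move=> x y; apply/idP/idP; last exact: Hhom.
move=> Hxy; have : g (x, y) \in E by rewrite inE.
by rewrite -{1}eqE (mem_imset _ _ ginj) inE.
Qed.

Definition autb n (adjG : rel 'I_n) (s : {perm 'I_n}) : bool :=
  [forall x, forall y, adjG (s x) (s y) == adjG x y].

Lemma autbP n (adjG : rel 'I_n) s : reflect (isAut adjG s) (autb adjG s).
Proof.
apply: (iffP forallP) => H.
  by move=> x y; move: (H x) => /forallP /(_ y) /eqP.
by move=> x; apply/forallP => y; rewrite H.
Qed.

Definition Kseq n (adjG : rel 'I_n) (a b : seq 'I_n) : bgraph := @BGraph n adjG a b.

Definition pf n (s : {perm 'I_n}) : {ffun 'I_n -> 'I_n} := [ffun x => s x].

Lemma pf_inj n : injective (@pf n).
Proof. by move=> s1 s2 /ffunP H; apply/permP => x; have := H x; rewrite !ffunE. Qed.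

Lemma TG_Kseq n (adjG : rel 'I_n) (symG : symmetric adjG) a b j i :
  TG adjG (Kseq adjG a b) j i =
  \sum_(s in [set s | autb adjG s]) ((map s a == i) && (map s b == j))%:R.
Proof.
rewrite /TG.
have -> : [set phi : {ffun 'I_(bg_m (Kseq adjG a b)) -> 'I_n} |
        [&& injectiveb phi,
            [forall x, forall y, sadj (Kseq adjG a b) x y ==> adjG (phi x) (phi y)],
            map phi (bg_in (Kseq adjG a b)) == i &
            map phi (bg_out (Kseq adjG a b)) == j]] =
   @pf n @: [set s | autb adjG s && ((map s a == i) && (map s b == j))].
  apply/setP => phi; rewrite inE; apply/idP/imsetP.
    move=> /and4P [/injectiveP Hi /forallP Hh Ha Hb].
    exists (perm Hi).
      rewrite inE; apply/andP; split.
        apply/autbP => x y; rewrite !permE; apply: count_aut => // x' y' Hxy.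
        by move: (Hh x') => /forallP /(_ y') /implyP; apply; rewrite /sadj /= Hxy.
      have Em : forall u, map (perm Hi) u = map phi u by move=> u; apply: eq_map => x; rewrite permE.
      by rewrite !Em Ha Hb.
    by apply/ffunP => x; rewrite ffunE permE.
  move=> [s]; rewrite inE => /andP [/autbP Hs /andP [Ha Hb]] ->.
  have Em : forall u, map (pf s) u = map s u by move=> u; apply: eq_map => x; rewrite ffunE.
  rewrite /= !Em Ha Hb !andbT; apply/andP; split.
    by apply/injectiveP => x y; rewrite !ffunE; apply: perm_inj.
  apply/forallP => x; apply/forallP => y; apply/implyP; rewrite !ffunE /sadj /= Hs.
  by rewrite (symG y x) orbb.
rewrite (card_imset _ (@pf_inj n)) -sum1_card natr_sum big_mkcond [RHS]big_mkcond /=.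
apply: eq_bigr => s _; rewrite !inE.
by case: (autb adjG s) => //=; case: ifP.
Qed.

Definition MorC n (A : Z2free n -> Prop) (adjG : rel 'I_n) k l
  (T : l.-tuple 'I_n -> k.-tuple 'I_n -> CC) :=
  forall j i s v, isAut adjG s ->
    T j (map_tuple s i) * (eb A (map_tuple s i) v)%:R =
    (eb A j v)%:R * T (map_tuple (s^-1)%g j) i.

Lemma TG_support n adjG A K j i : @Ccat n adjG A K -> TG adjG K j i != 0 -> Erel A j i.
Proof.
move=> HK; rewrite /TG pnatr_eq0 -lt0n => /card_gt0P [phi].
rewrite inE => /and4P [_ /forallP Hh /eqP Ha /eqP Hb].
rewrite -Ha -Hb; apply: HK => x y Hxy.
by move: (Hh x) => /forallP /(_ y) /implyP; apply.
Qed.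

Lemma mapsK n (s : {perm 'I_n}) (u : seq 'I_n) : map s (map (s^-1)%g u) = u.
Proof. exact: (mapK (permKV s)). Qed.
Lemma mapKs n (s : {perm 'I_n}) (u : seq 'I_n) : map (s^-1)%g (map s u) = u.
Proof. exact: (mapK (permK s)). Qed.

Lemma eb_trans n (A : Z2free n -> Prop) u w v : normal_subgroup A -> Erel A u w ->
  eb A u v = eb A w v.
Proof.
move=> hA H; apply/asboolP/asboolP => H2.
  by apply: Erel_trans hA (Erel_sym hA H) H2.
exact: Erel_trans hA H H2.
Qed.

Lemma TG_MorC n adjG A K k l : normal_subgroup A -> @Ccat n adjG A K ->
  MorC A adjG (fun (j : l.-tuple 'I_n) (i : k.-tuple 'I_n) => TG adjG K (val j) (val i)).
Proof.
move=> hA HK j i s v Hs /=.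
have -> : TG adjG K (map (s^-1)%g j) i = TG adjG K j (map s i).
  by rewrite -(TG_aut _ _ _ Hs) mapsK.
case: (eqVneq (TG adjG K j (map s i)) 0) => [->|nz]; first by rewrite mul0r mulr0.
by rewrite mulrC (eb_trans _ hA (TG_support HK nz)).
Qed.

Lemma CG_MorC n adjG A k l T : normal_subgroup A ->
  CG adjG (@Ccat n adjG A) T -> MorC A adjG (k:=k) (l:=l) T.
Proof.
move=> hA [N [c [Ks [HKs HT]]]] j i s v Hs.
rewrite !HT mulr_suml mulr_sumr; apply: eq_bigr => x _.
rewrite -mulrA (TG_MorC (k:=k) (l:=l) hA (proj1 (HKs x)) j i v Hs).
by rewrite !mulrA (mulrC (c x)).
Qed.

Lemma isAut1 n (adjG : rel 'I_n) : isAut adjG (1%g : {perm 'I_n}).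
Proof. by move=> x y; rewrite !perm1. Qed.

Lemma mt1 n k (t : k.-tuple 'I_n) : map_tuple (1%g : {perm 'I_n}) t = t.
Proof. by apply: val_inj => /=; apply: map_id_in => x _; rewrite perm1. Qed.

Lemma mtK n k (s : {perm 'I_n}) (t : k.-tuple 'I_n) : map_tuple (s^-1)%g (map_tuple s t) = t.
Proof. by apply: val_inj => /=; rewrite mapKs. Qed.
Lemma mtKV n k (s : {perm 'I_n}) (t : k.-tuple 'I_n) : map_tuple s (map_tuple (s^-1)%g t) = t.
Proof. by apply: val_inj => /=; rewrite mapsK. Qed.

Lemma MorC_supp n A adjG k l T j i : normal_subgroup A -> @MorC n A adjG k l T ->
  T j i != 0 -> Erel A j i.
Proof.
move=> hA H nz; have := H j i (1%g : {perm 'I_n}) i (isAut1 adjG).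
rewrite invg1 !mt1.
have -> : eb A i i = true by apply/asboolP; apply: Erel_refl.
case E: (eb A j i); first by move/asboolP: E.
by rewrite mulr1 mul0r => T0; move: nz; rewrite T0 eqxx.
Qed.

Lemma MorC_inv n A adjG k l T j i s : normal_subgroup A -> @MorC n A adjG k l T ->
  isAut adjG s -> T j (map_tuple s i) = T (map_tuple (s^-1)%g j) i.
Proof.
move=> hA H Hs.
case E: (eb A j (map_tuple s i)).
  have := H j i s (map_tuple s i) Hs.
  have -> : eb A (map_tuple s i) (map_tuple s i) = true by apply/asboolP; apply: Erel_refl.
  by rewrite E mulr1 mul1r.
have T0 : T j (map_tuple s i) = 0.
  apply/eqP; apply: contraFT E => nz; apply/asboolP; exact: MorC_supp hA H nz.
rewrite T0; have := H (map_tuple (s^-1)%g j) (map_tuple s i) (s^-1)%g i (isAut_inv Hs).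
rewrite invgK mtK mtKV T0 mulr0.
have -> : eb A i i = true by apply/asboolP; apply: Erel_refl.
by rewrite mulr1.
Qed.

Lemma map_eq_tuple n k (s : {perm 'I_n}) (t u : k.-tuple 'I_n) :
  (map s (val t) == val u) = (t == map_tuple (s^-1)%g u).
Proof.
rewrite -val_eqE /=; apply/eqP/eqP => [<-|->]; first by rewrite mapKs.
by rewrite mapsK.
Qed.

Lemma MorC_CG n (adjG : rel 'I_n) (symG : symmetric adjG) A (hA : normal_subgroup A)
  (hEnd : End_invariant adjG A) k l T :
  MorC A adjG (k:=k) (l:=l) T -> CG adjG (Ccat adjG A) T.
Proof.
move=> H.
pose S0 := [set p : l.-tuple 'I_n * k.-tuple 'I_n | T p.1 p.2 != 0].
pose Aut := [set s : {perm 'I_n} | autb adjG s].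
pose c (p : l.-tuple 'I_n * k.-tuple 'I_n) := T p.1 p.2 / (#|Aut|%:R).
exists #|S0|, (fun x => c (enum_val x)),
  (fun x => Kseq adjG (val (enum_val x).2) (val (enum_val x).1)).
split.
  move=> x; have := enum_valP x; rewrite inE => nz; split.
    move=> phi Hphi /=; apply: Erel_map (MorC_supp hA H nz) _.
    apply: hEnd => a b Hab; apply: Hphi; by rewrite /sadj /= Hab.
  by rewrite /inC /= !size_tuple !eqxx.
move=> j i.
have := big_enum_val (op := +%R) (idx := 0 : CC) (A := mem S0)
  (fun p => c p * TG adjG (Kseq adjG (val p.2) (val p.1)) (val j) (val i)).
move=> /= <-.
rewrite big_mkcond /=.
under eq_bigr => p _ do rewrite (TG_Kseq symG) inE.
rewrite (eq_bigr (fun p : l.-tuple 'I_n * k.-tuple 'I_n =>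
    \sum_(s in Aut) c p * ((map s p.2 == val i) && (map s p.1 == val j))%:R)); last first.
  move=> p _; rewrite -mulr_sumr; case: eqP => //= E.
  by rewrite /c E !mul0r.
rewrite exchange_big /=.
have -> : \sum_(s in Aut) \sum_(p : l.-tuple 'I_n * k.-tuple 'I_n)
    c p * ((map s p.2 == val i) && (map s p.1 == val j))%:R =
    \sum_(s in Aut) T j i / #|Aut|%:R.
  apply: eq_bigr => s; rewrite inE => /autbP Hs.
  rewrite (bigD1 (map_tuple (s^-1)%g j, map_tuple (s^-1)%g i)) //= big1.
    rewrite !map_eq_tuple !eqxx mulr1 addr0 /c /=.
    have E := @MorC_inv n A adjG k l T j (map_tuple (s^-1)%g i) s hA H Hs.
    by rewrite mtKV in E; rewrite -E.
  move=> [p1 p2] Hp; rewrite !map_eq_tuple /=.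
  case: eqP => [E2|_]; last by rewrite mulr0.
  case: eqP => [E1|_]; last by rewrite mulr0.
  by move: Hp; rewrite E1 E2 eqxx.
rewrite sumr_const -mulrnAr -(mulr_natr ((#|Aut|%:R : CC)^-1)) mulVf ?mulr1 // pnatr_eq0 -lt0n.
by apply/card_gt0P; exists 1%g; rewrite inE; apply/autbP; apply: isAut1.
Qed.

Unset Implicit Arguments.
Local Close Scope ring_scope.

Theorem proposition5p5 (n : nat) (adjG : rel 'I_n) (symG : symmetric adjG)
  (A : Z2free n -> Prop) (hA : normal_subgroup A) (hEnd : End_invariant adjG A) :
  exists C : bgraph -> Prop,
    group_theoretical C /\
    forall (k l : nat) (T : l.-tuple 'I_n -> k.-tuple 'I_n -> CC),
      CG adjG C T <-> Mor adjG A T.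
Proof.
exists (Ccat adjG A); split; first exact: Ccat_gt.
move=> k l T; split.
  by move=> H; apply/Mor_iff; apply: CG_MorC.
by move/Mor_iff => H; apply: MorC_CG.
Qed.
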